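(* Let $H$ be an $m\times n$ binary parity-check matrix with Tanner graph $G$, let $\underline\gamma\in\mathbb R^n$, and let $\underline x$ be the (unique) optimal solution of the LP decoding problem $\min\{\underline\gamma^T\underline x:\underline x\in\mathscr P\}$, where $\mathscr P$ is the fundamental polytope. Let $F$ be the fractional subgraph of $G$ at $\underline x$, written as the disjoint union of its connected components (clusters) $F_1,\dots,F_K$. Then each cluster $F_i$ contains a cycle.
   Context: The Tanner graph $G$ of $H$ is the bipartite graph with variable nodes $1,\dots,n$, check nodes $1,\dots,m$, and an edge between check $j$ and variable $i$ iff $H_{ji}=1$; $N(j)$ is the set of variable nodes adjacent to check $j$. The fundamental polytope $\mathscr P$ is the set of $\underline x\in[0,1]^n$ such that for every $j$ and every odd-sized $V\subseteq N(j)$, $\sum_{i\in V}x_i-\sum_{i\in N(j)\setminus V}x_i\le |V|-1$. The fractional subgraph $F$ at $\underline x$ is the subgraph of $G$ consisting of the variable nodes $i$ with $0<x_i<1$, the check nodes adjacent to them, and all edges between these nodes. *)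

(* Defs.v *)
From HB Require Import structures.
From mathcomp Require Import all_boot all_order all_algebra.
Set Implicit Arguments. Unset Strict Implicit. Unset Printing Implicit Defensive.
Import Order.TTheory GRing.Theory Num.Theory.
Local Open Scope ring_scope.

(* Tanner graph of a binary m x n parity-check matrix H (entries in bool).
   Vertices: inl i = variable node i, inr j = check node j. *)
Definition tanner_vertex (m n : nat) : finType := ('I_n + 'I_m)%type.

Definition tanner_adj (m n : nat) (H : 'M[bool]_(m, n)) :
  rel (tanner_vertex m n) :=
  fun u v => match u, v with
  | inl i, inr j => H j i
  | inr j, inl i => H j i
  | _, _ => false
  end.

Definition nbhd (m n : nat) (H : 'M[bool]_(m, n)) (j : 'I_m) : {set 'I_n} :=
  [set i | H j i].

Definition in_fund_polytope (R : realFieldType) (m n : nat)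
  (H : 'M[bool]_(m, n)) (x : 'I_n -> R) : Prop :=
  (forall i, 0 <= x i <= 1) /\
  (forall (j : 'I_m) (V : {set 'I_n}), V \subset nbhd H j -> odd #|V| ->
     \sum_(i in V) x i - \sum_(i in nbhd H j :\: V) x i <= #|V|%:R - 1).

Definition lp_cost (R : realFieldType) (n : nat) (g x : 'I_n -> R) : R :=
  \sum_(i < n) g i * x i.

Definition unique_lp_optimum (R : realFieldType) (m n : nat)
  (H : 'M[bool]_(m, n)) (g x : 'I_n -> R) : Prop :=
  [/\ in_fund_polytope H x,
      (forall y, in_fund_polytope H y -> lp_cost g x <= lp_cost g y)
    & (forall y, in_fund_polytope H y -> lp_cost g y = lp_cost g x ->
         forall i, y i = x i)].

Definition frac_vertex (R : realFieldType) (m n : nat)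
  (H : 'M[bool]_(m, n)) (x : 'I_n -> R) (v : tanner_vertex m n) : bool :=
  match v with
  | inl i => (0 < x i) && (x i < 1)
  | inr j => [exists i, H j i && ((0 < x i) && (x i < 1))]
  end.

Definition frac_adj (R : realFieldType) (m n : nat)
  (H : 'M[bool]_(m, n)) (x : 'I_n -> R) : rel (tanner_vertex m n) :=
  fun u v => [&& frac_vertex H x u, frac_vertex H x v & tanner_adj H u v].

Definition cluster_has_cycle (R : realFieldType) (m n : nat)
  (H : 'M[bool]_(m, n)) (x : 'I_n -> R) (v : tanner_vertex m n) : Prop :=
  exists s : seq (tanner_vertex m n),
    [/\ (3 <= size s)%N, uniq s, cycle (frac_adj H x) s
      & all (fun w => connect (frac_adj H x) v w) s].

(* Main.v *)
Require Import Defs.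
From HB Require Import structures.
From mathcomp Require Import all_boot all_order all_algebra.
From mathcomp Require Import zify ring lra.
Set Implicit Arguments. Unset Strict Implicit. Unset Printing Implicit Defensive.

Section Graph.
Variables (T : finType) (e : rel T).
Hypotheses (esym : symmetric e) (eirr : irreflexive e).

Definition has_cyc (X : {set T}) := exists s : seq T,
  [/\ (3 <= size s)%N, uniq s, cycle e s & all (fun w => w \in X) s].

Lemma walk_step (X : {set T}) :
  (forall u, u \in X -> 1 < #|[set w in X | e u w]|) ->
  forall u rest, uniq (u :: rest) -> path e u rest -> all (fun w => w \in X) (u :: rest) ->
  has_cyc X \/ exists w, [/\ uniq (w :: u :: rest), path e w (u :: rest) &
     all (fun w => w \in X) (w :: u :: rest)].
Proof.
move=> hdeg u rest hu hp hall.
have uX : u \in X by move: hall => /= /andP[].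
have [w [hwX hew hwp]] : exists w, [/\ w \in X, e u w & forall p0 r', rest = p0 :: r' -> w != p0].
  have /card_gt1P [w1 [w2 [h1 h2 h12]]] := hdeg u uX.
  move: h1 h2; rewrite !inE => /andP[w1X e1] /andP[w2X e2].
  case: rest hu hp hall => [|p0 r'] hu hp hall.
    by exists w1; split => // p0 r' [].
  case: (eqVneq w1 p0) => [E1|N1].
    exists w2; split => // q r'' [<- _]; rewrite -E1 eq_sym //.
  by exists w1; split => // q r'' [<- _].
case win: (w \in u :: rest); last first.
  right; exists w; split.
  - by rewrite cons_uniq win hu.
  - by rewrite /= esym hew.
  - by rewrite /= hwX.
left.
have wu : w != u by apply: contraTneq hew => ->; rewrite eirr.
move: win; rewrite inE (negbTE wu) /= => wr.
set i := index w rest.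
have ilt : (i < size rest)%N by rewrite index_mem.
have i1 : (0 < i)%N.
  case: rest hwp wr @i ilt {hu hp hall} => [|p0 r'] hwp //= wr.
  have := hwp p0 r' erefl; rewrite eq_sym => /negbTE ->; done.
have Erest : rest = take i rest ++ w :: drop i.+1 rest.
  by rewrite -[in LHS](cat_take_drop i rest) (drop_nth w ilt) nth_index.
exists (u :: rcons (take i rest) w); split.
- by rewrite /= size_rcons size_take ilt; lia.
- rewrite /= rcons_uniq mem_rcons inE negb_or (in_take _ wr) ltnn /=.
  move: hu => /= /andP[hu1 hu2]; rewrite take_uniq // andbT.
  apply/andP; split; first by rewrite eq_sym.
  by apply: contra hu1; apply: mem_take.
- rewrite /= rcons_path; move: hp; rewrite {1}Erest cat_path /= => /andP[h1 /andP[h2 _]].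
  by rewrite rcons_path h1 h2 last_rcons esym hew.
- apply/allP => z; rewrite inE mem_rcons inE => /orP[/eqP->//|/orP[/eqP->//|]].
  move=> /mem_take zr; move/allP: hall; apply; by rewrite inE zr orbT.
Qed.

Lemma mindeg_cycle (X : {set T}) :
  (forall u, u \in X -> 1 < #|[set w in X | e u w]|) -> (0 < #|X|)%N -> has_cyc X.
Proof.
move=> hdeg /card_gt0P [u0 u0X].
suff: forall k, has_cyc X \/ exists q, [/\ size q = k.+1, uniq q, path e (head u0 q) (behead q) &
   all (fun w => w \in X) q].
  move=> /(_ #|T|) [//|[q [sq uq _ _]]].
  have := card_uniqP uq; have := max_card (mem q); rewrite sq => h1 h2; move: h1; rewrite [#|mem q|]h2; lia.
elim=> [|k [hc|[[|u rest] [sq uq pq aq]]]]; [|by left|by []|].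
  by right; exists [:: u0]; rewrite /= u0X.
have [|[w [h1 h2 h3]]] := walk_step hdeg uq pq aq; first by left.
by right; exists (w :: u :: rest); rewrite /= in sq *; rewrite sq.
Qed.

Lemma has_cyc_sub (X Y : {set T}) : X \subset Y -> has_cyc X -> has_cyc Y.
Proof.
move=> /subsetP sXY [s [h1 h2 h3 h4]]; exists s; split => //.
by apply/allP => z /(allP h4) /sXY.
Qed.

Definition degX (X : {set T}) u := #|[set w in X | e u w]|.

Lemma sum_nat_card (A : {set T}) (b : pred T) :
  \sum_(w in A) (b w : nat) = #|[set w in A | b w]|.
Proof.
rewrite -sum1_card big_mkcond [RHS]big_mkcond /=.
by apply: eq_bigr => w _; rewrite inE; case: (w \in A); case: (b w).
Qed.

Lemma degX_del (X : {set T}) u w : u \in X -> w \in X :\ u ->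
  degX X w = degX (X :\ u) w + e w u.
Proof.
move=> uX wX; rewrite /degX (cardsD1 u [set w0 in X | e w w0]) inE uX /= addnC.
congr (_ + _); apply: eq_card => z; rewrite !inE; by case: (z == u); case: (z \in X).
Qed.

Lemma core_cycle (X : {set T}) : (0 < #|X|)%N ->
  (2 * #|X| <= \sum_(u in X) degX X u)%N -> has_cyc X.
Proof.
move Hk: #|X| => k; elim: k X Hk => [|k IH] X Hk //= _ hsum.
case: (boolP [forall u in X, 1 < degX X u]) => [/forall_inP hall|].
  by apply: mindeg_cycle; [move=> u uX; apply: hall | rewrite Hk].
rewrite negb_forall_in => /existsP [u /andP[uX]]; rewrite -leqNgt => du.
have cX' : #|X :\ u| = k by move: (cardsD1 u X); rewrite uX Hk add1n => -[].
have sub : X :\ u \subset X by apply: subsetDl.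
have Hsplit : \sum_(w in X) degX X w =
   degX X u + \sum_(w in X :\ u) degX (X :\ u) w + degX X u.
  rewrite (bigD1 u uX) /= -addnA; congr (_ + _).
  have -> : \sum_(w in X | w != u) degX X w = \sum_(w in X :\ u) degX X w.
    by apply: eq_bigl => w; rewrite !inE andbC.
  rewrite (eq_bigr (fun w => degX (X :\ u) w + e w u)); last first.
    by move=> w wX; apply: degX_del.
  rewrite big_split /=; congr (_ + _).
  rewrite sum_nat_card /degX; apply: eq_card => z; rewrite !inE esym.
  by case: (eqVneq z u) => [->|]; rewrite ?eirr ?andbF //.
case: k IH Hk cX' hsum => [|k] IH Hk cX' hsum.
  exfalso; move: hsum; rewrite Hsplit.
  have -> : X :\ u = set0 by apply/eqP; rewrite -cards_eq0 cX'.
  rewrite big_set0.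
  have : degX X u = 0.
    apply/eqP; rewrite cards_eq0; apply/eqP/setP => z; rewrite !inE.
    case zX: (z \in X) => //=.
    have : z \in X :\ u = false by rewrite (_ : X :\ u = set0) ?inE //; apply/eqP; rewrite -cards_eq0 cX'.
    rewrite !inE zX andbT => /negbFE/eqP ->; by rewrite eirr.
  move=> ->; done.
apply: (has_cyc_sub sub); apply: IH => //.
move: hsum; rewrite Hsplit; lia.
Qed.
End Graph.

Import Order.TTheory GRing.Theory Num.Theory.
Local Open Scope ring_scope.

Lemma pos_lb (R : realFieldType) (I : finType) (P : pred I) (f : I -> R) :
  (forall c, P c -> 0 < f c) -> exists2 r : R, 0 < r & forall c, P c -> r <= f c.
Proof.
move=> hf.
have hS : 0 <= \sum_(c | P c) (f c)^-1 by apply: sumr_ge0 => c /hf; rewrite invr_ge0 => /ltW.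
have hD : 0 < 1 + \sum_(c | P c) (f c)^-1 by lra.
exists (1 + \sum_(c | P c) (f c)^-1)^-1; first by rewrite invr_gt0.
move=> c Pc; have fc := hf c Pc.
rewrite -[f c]invrK lef_pV2 ?posrE ?invr_gt0 //.
rewrite (bigD1 c) //=.
have : 0 <= \sum_(i | P i && (i != c)) (f i)^-1.
  by apply: sumr_ge0 => i /andP[/hf]; rewrite invr_ge0 => /ltW.
lra.
Qed.

Section LP.
Variables (R : realFieldType) (m n : nat) (H : 'M[bool]_(m, n)).

Definition Lf (j : 'I_m) (V : {set 'I_n}) (z : 'I_n -> R) :=
  \sum_(i in V) z i - \sum_(i in nbhd H j :\: V) z i.

Lemma Lform j (V : {set 'I_n}) (z : 'I_n -> R) : V \subset nbhd H j ->
  Lf j V z = \sum_(i in nbhd H j) (if i \in V then z i else - z i).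
Proof.
move=> sV; rewrite /Lf [in RHS](big_setID V) /=.
rewrite (setIidPr sV) addrC addrC; congr (_ + _).
  by apply: eq_bigr => i ->.
rewrite -sumrN; apply: eq_bigr => i; rewrite inE => /andP[/negbTE -> _] //.
Qed.

Definition fracv (x : 'I_n -> R) i := (0 < x i) && (x i < 1).

Definition tight (x : 'I_n -> R) (j : 'I_m) (V : {set 'I_n}) :=
  [&& V \subset nbhd H j, odd #|V| & Lf j V x == #|V|%:R - 1].


Lemma Llin j V (x d : 'I_n -> R) t :
  Lf j V (fun i => x i + t * d i) = Lf j V x + t * Lf j V d.
Proof.
rewrite /Lf !big_split /= -!mulr_sumr; ring.
Qed.

Lemma sum_sub_le (A : {set 'I_n}) (F : 'I_n -> R) : (forall i, 0 <= F i) ->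
  \sum_(i in A) F i <= \sum_i F i.
Proof.
move=> hF; rewrite big_mkcond /=; apply: ler_sum => i _; case: ifP => _ //.
Qed.

Lemma perturb (gamma x : 'I_n -> R) : unique_lp_optimum H gamma x ->
  forall d : 'I_n -> R, (forall i, ~~ fracv x i -> d i = 0) ->
  (forall j V, tight x j V -> Lf j V d = 0) -> forall i, d i = 0.
Proof.
move=> [inP hmin huniq] d hdf hdt i0.
case: (eqVneq (d i0) 0) => // hd0; exfalso.
set M := \sum_i `|d i|.
have dM : forall i, `|d i| <= M.
  move=> i; rewrite /M (bigD1 i) //=.
  have : 0 <= \sum_(k | k != i) `|d k| by apply: sumr_ge0.
  lra.
have M0 : 0 < M by apply: lt_le_trans (dM i0); rewrite normr_gt0.
have LM : forall j (V : {set 'I_n}), V \subset nbhd H j -> `|Lf j V d| <= M.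
  move=> j V sV; rewrite Lform //; apply: le_trans (ler_norm_sum _ _ _) _.
  apply: le_trans (sum_sub_le _ _) _; first by move=> i.
  apply: ler_sum => i _; case: ifP => _ //; rewrite normrN //.
have [r1 r1p hr1] := @pos_lb R _
  (fun c : 'I_m * {set 'I_n} => [&& c.2 \subset nbhd H c.1, odd #|c.2| & Lf c.1 c.2 x < #|c.2|%:R - 1])
  (fun c => #|c.2|%:R - 1 - Lf c.1 c.2 x)
  ltac:(by move=> c /and3P[_ _ hc]; rewrite subr_gt0).
have [r2 r2p hr2] := @pos_lb R _ (fracv x) (fun i => Num.min (x i) (1 - x i))
  ltac:(by move=> i; rewrite /fracv => /andP[h1 h2]; rewrite lt_min h1 subr_gt0 h2).
set r := Num.min r1 r2.
have rp : 0 < r by rewrite lt_min r1p r2p.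
set eps := r / M.
have epsp : 0 < eps by rewrite divr_gt0.
have epsM : eps * M = r by rewrite /eps divfK // gt_eqF.
have tb : forall t a, `|t| <= eps -> `|a| <= M -> `|t * a| <= r.
  move=> t a ht ha; rewrite normrM -epsM; apply: ler_pM => //.
have rr1 : r <= r1 by rewrite ge_min lexx.
have rr2 : r <= r2 by rewrite ge_min lexx orbT.
have key : forall t, `|t| <= eps -> in_fund_polytope H (fun i => x i + t * d i).
  move=> t ht; split.
    move=> i; case: (boolP (fracv x i)) => fi; last first.
      by rewrite (hdf i fi) mulr0 addr0; case: inP => ->.
    have := hr2 i fi; rewrite le_min => /andP[h1 h2].
    have := tb t (d i) ht (dM i); rewrite ler_norml => /andP[h3 h4].
    apply/andP; split; lra.
  move=> j V sV oV.
  change (Lf j V (fun i => x i + t * d i) <= #|V|%:R - 1).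
  rewrite Llin.
  have hx : Lf j V x <= #|V|%:R - 1 by case: inP => _; apply.
  case: (boolP (Lf j V x < #|V|%:R - 1)) => hlt.
    have := hr1 (j, V); rewrite /= sV oV hlt => /(_ isT) hs.
    have := tb t (Lf j V d) ht (LM j V sV); rewrite ler_norml => /andP[h3 h4].
    lra.
  have ht' : tight x j V by rewrite /tight sV oV eq_le hx leNgt hlt.
  by rewrite (hdt j V ht') mulr0 addr0.
have cost : forall t, lp_cost gamma (fun i => x i + t * d i) =
    lp_cost gamma x + t * \sum_i gamma i * d i.
  move=> t; rewrite /lp_cost mulr_sumr -big_split /=; apply: eq_bigr => i _; ring.
have e1 : `|eps| <= eps by rewrite ger0_norm // ltW.
have e2 : `|- eps| <= eps by rewrite normrN.
have k1 := hmin _ (key eps e1).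
have k2 := hmin _ (key (- eps) e2).
rewrite !cost in k1 k2.
have ce : lp_cost gamma (fun i => x i + eps * d i) = lp_cost gamma x.
  rewrite cost; lra.
have := huniq _ (key eps e1) ce i0.
move=> /eqP; rewrite -subr_eq0 addrC addKr mulf_eq0 (negbTE hd0) orbF => /eqP e0.
by move: epsp; rewrite e0 ltxx.
Qed.


Definition dlt (x : 'I_n -> R) (V : {set 'I_n}) i := if i \in V then 1 - x i else x i.

Lemma tight_dlt x j V : tight x j V -> \sum_(i in nbhd H j) dlt x V i = 1.
Proof.
move=> /and3P[sV oV /eqP hL].
have e1 : \sum_(i in nbhd H j) dlt x V i + Lf j V x = #|V|%:R.
  rewrite Lform // -big_split /=.
  rewrite (eq_bigr (fun i => if i \in V then 1 else 0)); last first.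
    by move=> i _; rewrite /dlt; case: ifP => _; ring.
  rewrite -big_mkcondr /= (eq_bigl (fun i => i \in V)); first by rewrite sumr_const.
  by move=> i; rewrite /=; case iV: (i \in V); rewrite ?andbT ?andbF //; apply: (subsetP sV).
move: e1; rewrite hL; lra.
Qed.

Lemma dlt_ge0 x V i : (forall i, 0 <= x i <= 1) -> 0 <= dlt x V i.
Proof. by move=> hb; rewrite /dlt; have := hb i; case: ifP => _ /andP[h1 h2]; lra. Qed.

Lemma dlt_gt0 x V i : fracv x i -> 0 < dlt x V i.
Proof. by rewrite /fracv /dlt => /andP[h1 h2]; case: ifP => _; lra. Qed.

Lemma pattern x j V V' : (forall i, 0 <= x i <= 1) -> tight x j V -> tight x j V' ->
  (forall i, i \in nbhd H j -> fracv x i -> (i \in V) = (i \in V')) \/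
  (forall i, i \in nbhd H j -> fracv x i -> (i \in V) != (i \in V')).
Proof.
move=> hb tV tV'.
case: (boolP [forall i in nbhd H j, fracv x i ==> ((i \in V) == (i \in V'))]) => [/forall_inP h|].
  by left => i iN fi; apply/eqP; have := h i iN; rewrite fi.
rewrite negb_forall_in => /existsP [i1 /andP[i1N]]; rewrite negb_imply => /andP[f1 d1].
case: (boolP [forall i in nbhd H j, fracv x i ==> ((i \in V) != (i \in V'))]) => [/forall_inP h|].
  by right => i iN fi; have := h i iN; rewrite fi.
rewrite negb_forall_in => /existsP [i2 /andP[i2N]]; rewrite negb_imply negbK => /andP[f2 /eqP s2].
exfalso.
move: (tV) (tV') => /and3P[sV oV _] /and3P[sV' oV' _].
set D := [set i in nbhd H j | (i \in V) != (i \in V')].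
have cD : (#|V| + #|V'| = #|D| + 2 * #|V :&: V'|)%N.
  rewrite -cardsUI.
  have -> : D = (V :|: V') :\: (V :&: V').
    apply/setP => i; rewrite !inE.
    case iV: (i \in V); case iV': (i \in V'); rewrite ?andbF ?andbT //=.
    - by move: (subsetP sV i); rewrite !inE iV => ->.
    - by move: (subsetP sV' i); rewrite !inE iV' => ->.
  have := cardsID (V :&: V') (V :|: V').
  have -> : (V :|: V') :&: (V :&: V') = V :&: V'.
    by apply/setIidPr; apply: subset_trans (subsetIl _ _) (subsetUl _ _).
  by move=> <-; rewrite -addnA addnC mul2n -addnn addnA.
have eD : ~~ odd #|D|.
  have := congr1 odd cD; rewrite !oddD oV oV' /=; by case: (odd #|D|); case: (odd #|V :&: V'|).
have i1D : i1 \in D by rewrite inE i1N.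
have i2D : i2 \notin D by rewrite inE i2N s2 eqxx.
have D2 : (2 <= #|D|)%N.
  have : (0 < #|D|)%N by apply/card_gt0P; exists i1.
  by move: eD; case: #|D| => [|[|k]].
have h2 := tight_dlt tV; have h2' := tight_dlt tV'.
have hsum : \sum_(i in nbhd H j) (dlt x V i + dlt x V' i) = 2 by rewrite big_split /= h2 h2'.
have hi2 : dlt x V i2 + dlt x V' i2 = 2 * dlt x V i2 by rewrite /dlt -s2; case: ifP => _; ring.
have hge : forall i, i \in nbhd H j -> i != i2 ->
   ((i \in D) : nat)%:R <= dlt x V i + dlt x V' i.
  move=> i iN _; rewrite inE iN /=.
  case: (eqVneq (i \in V) (i \in V')) => [e|ne] /=.
    by apply: addr_ge0; apply: dlt_ge0.
  rewrite /dlt; move: ne; case: (i \in V); case: (i \in V') => //= _; lra.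
have cDsum : \sum_(i in nbhd H j | i != i2) ((i \in D) : nat)%:R = #|D|%:R :> R.
  rewrite -natr_sum; congr (_%:R).
  rewrite -sum1_card [RHS]big_mkcond /= big_mkcondr /=.
  rewrite [RHS](bigID (fun i => i \in nbhd H j)) /=.
  rewrite [X in (_ = _ + X)%N]big1; last by move=> i /negbTE iN; rewrite inE iN.
  rewrite addn0 big_mkcond /=; rewrite [RHS]big_mkcond /=; apply: eq_bigr => i _.
  case: (i \in nbhd H j) => //; case: (eqVneq i i2) => [->|] //=.
  by rewrite (negbTE i2D).
have hs : \sum_(i in nbhd H j | i != i2) ((i \in D) : nat)%:R <=
   \sum_(i in nbhd H j | i != i2) (dlt x V i + dlt x V' i) :> R.
  by apply: ler_sum => i /andP[]; apply: hge.
rewrite cDsum in hs.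
move: hsum; rewrite (bigD1 i2) //= hi2 => hsum.
have := dlt_gt0 V f2.
have : (2%:R : R) <= #|D|%:R by rewrite ler_nat.
lra.
Qed.

End LP.

Lemma card_sum (I1 I2 : finType) (P : {set I1 + I2}) :
  #|P| = (#|[set i | inl i \in P]| + #|[set j | inr j \in P]|)%N.
Proof.
rewrite -!sum1_card big_sumType /=; congr (_ + _)%N; apply: eq_bigl => i; by rewrite inE.
Qed.

Section Main.
Variables (R : realFieldType) (m n : nat) (H : 'M[bool]_(m, n)) (gamma x : 'I_n -> R).
Hypothesis hopt : unique_lp_optimum H gamma x.
Variable v : tanner_vertex m n.
Hypothesis hv : frac_vertex H x v.

Let e := frac_adj H x.

Lemma esym : symmetric e.
Proof.
move=> u w; rewrite /e /frac_adj.
case: (frac_vertex H x u); case: (frac_vertex H x w) => //=.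
by case: u => ?; case: w => ?.
Qed.

Lemma eirr : irreflexive e.
Proof. by move=> u; rewrite /e /frac_adj; case: u => ? /=; rewrite !andbF. Qed.

Let K := [set w | connect e v w].

Lemma K_frac w : w \in K -> frac_vertex H x w.
Proof.
rewrite inE => /connectP [p pp ->].
case/lastP: p pp => [|p z] //= pp.
by move: pp; rewrite rcons_path last_rcons => /andP[_ /and3P[_ ->]].
Qed.

Lemma K_step w u : w \in K -> e w u -> u \in K.
Proof. by rewrite !inE => h1 h2; apply: connect_trans h1 (connect1 h2). Qed.

Lemma K_var (j : 'I_m) (i : 'I_n) : inr j \in K -> H j i -> fracv x i -> inl i \in K.
Proof.
move=> jK hji fi; apply: (K_step jK).
by apply/and3P; split; [exact: (K_frac jK) | exact: fi | exact: hji].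
Qed.

Lemma K_chk (j : 'I_m) (i : 'I_n) : inl i \in K -> H j i -> inr j \in K.
Proof.
move=> iK hji; apply: (K_step iK).
apply/and3P; split; [exact: (K_frac iK) | | exact: hji].
by apply/existsP; exists i; rewrite hji; apply: (K_frac iK).
Qed.

Lemma box : forall i, 0 <= x i <= 1.
Proof. by case: hopt => [[hb _] _ _]. Qed.

Let W := [set i | inl i \in K].
Let Ct := [set j | (inr j \in K) && [exists V, tight H x j V]].

Lemma W_frac (i : 'I_n) : i \in W -> fracv x i.
Proof. by rewrite inE => /K_frac. Qed.

Definition Vj (j : 'I_m) := odflt set0 [pick V | tight H x j V].

Lemma Vj_tight (j : 'I_m) : [exists V, tight H x j V] -> tight H x j (Vj j).
Proof.
rewrite /Vj; case: pickP => [V hV|h] //= /existsP [V hV].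
by rewrite h in hV.
Qed.

Lemma two_frac (j : 'I_m) : j \in Ct -> (1 < #|[set i | H j i && fracv x i]|)%N.
Proof.
rewrite inE => /andP[jK /Vj_tight tV].
have := K_frac jK => /existsP [i1 /andP[h1 f1]]; change (is_true (fracv x i1)) in f1.
rewrite ltnNge; apply/negP => hc.
have oth : forall i, i \in nbhd H j -> i != i1 -> ~~ fracv x i.
  move=> i; rewrite inE => hi ne; apply/negP => fi.
  move: hc; rewrite leqNgt => /negP; apply; apply/card_gt1P.
  by exists i, i1; rewrite !inE hi fi h1 f1.
have := tight_dlt tV.
rewrite (bigD1 i1) /=; last by rewrite inE.
have -> : \sum_(i in nbhd H j | i != i1) dlt x (Vj j) i =
   (\sum_(i in nbhd H j | i != i1) ((if i \in Vj j then x i == 0%R else x i == 1%R) : nat))%:R.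
  rewrite natr_sum; apply: eq_bigr => i /andP[iN ne].
  have := oth i iN ne; have := box i; rewrite /fracv /dlt.
  move=> /andP[b1 b2] hnf.
  have : x i = 0 \/ x i = 1.
    move: hnf; rewrite negb_and -!leNgt => /orP[h|h]; [left|right]; apply/eqP; rewrite eq_le ?h ?b1 ?b2 //.
  case=> ->; case: ifP => _ /=; rewrite ?eqxx ?oner_eq0 ?(eq_sym (0:R)) ?oner_eq0 /=; lra.
have := dlt_gt0 (Vj j) f1.
have : dlt x (Vj j) i1 < 1 by move: f1; rewrite /fracv /dlt => /andP[a b]; case: ifP => _; lra.
case: (\sum_(i in nbhd H j | i != i1) _)%N => [|k] a b.
  rewrite addr0; lra.
have : (1 : R) <= k.+1%:R by rewrite ler1n.
lra.
Qed.


Definition cf (j : 'I_m) (i : 'I_n) : R :=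
  if i \in nbhd H j then (if i \in Vj j then 1 else -1) else 0.

Lemma Lf_cf (j : 'I_m) (d : 'I_n -> R) : Vj j \subset nbhd H j ->
  Lf H j (Vj j) d = \sum_i d i * cf j i.
Proof.
move=> sV; rewrite Lform // big_mkcond /=; apply: eq_bigr => i _.
rewrite /cf; case: (i \in nbhd H j); case: (i \in Vj j); ring.
Qed.

Definition rowc (c : 'I_n + 'I_m) (i : 'I_n) : R :=
  match c with inl k => (i == k)%:R | inr j => cf j i end.

Lemma count_WC : (#|W| <= #|Ct|)%N.
Proof.
rewrite leqNgt; apply/negP => hlt.
pose E := [set c : 'I_n + 'I_m | match c with inl i => i \notin W | inr j => j \in Ct end].
have cE : (#|E| < n)%N.
  rewrite card_sum.
  have -> : #|[set i | inl i \in E]| = #|[predC W]| by apply: eq_card => i; rewrite !inE.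
  have -> : #|[set j | inr j \in E]| = #|Ct| by apply: eq_card => j; rewrite !inE.
  have := cardC W; rewrite card_ord.
  move: #|W| #|Ct| #|[predC W]| hlt => a b c; lia.
pose A := \matrix_(k < #|E|, i < n) rowc (enum_val k) i.
have rk : (\rank A^T < n)%N by rewrite mxrank_tr; apply: leq_ltn_trans (rank_leq_row A) cE.
have kr : kermx A^T != 0 by rewrite -mxrank_eq0 mxrank_ker subn_eq0 -ltnNge rk.
have : ~~ [forall k, forall i, kermx A^T k i == 0].
  apply: contra kr => /forallP h; apply/eqP/matrixP => k i; rewrite [RHS]mxE.
  by have /forallP /(_ i) /eqP := h k.
rewrite negb_forall => /existsP [k0]; rewrite negb_forall => /existsP [i0 hk].
pose d := fun i => kermx A^T k0 i.
have hker : forall c, c \in E -> \sum_i d i * rowc c i = 0.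
  move=> c cE'.
  have := congr1 (fun M : 'M_(n, #|E|) => M k0 (enum_rank_in cE' c)) (mulmx_ker A^T).
  rewrite [in RHS]mxE mxE => h; rewrite -[RHS]h; apply: eq_bigr => i _; rewrite [X in _ = _ * X]mxE [X in _ = _ * X]mxE enum_rankK_in //.
have dW : forall i, i \notin W -> d i = 0.
  move=> i iW; have := hker (inl i); rewrite inE iW => /(_ isT) /=.
  rewrite (bigD1 i) //= eqxx mulr1 big1 ?addr0 // => k /negbTE ->; by rewrite mulr0.
have dfr : forall i, ~~ fracv x i -> d i = 0.
  by move=> i fi; apply: dW; apply: contra fi; apply: W_frac.
have hdt : forall j V, tight H x j V -> Lf H j V d = 0.
  move=> j V tV; have /and3P[sV _ _] := tV.
  case: (boolP (inr j \in K)) => jK.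
    have jC : j \in Ct by rewrite inE jK; apply/existsP; exists V.
    have ex : [exists V, tight H x j V] by apply/existsP; exists V.
    have tVj := Vj_tight ex; have /and3P[sVj _ _] := tVj.
    have h0 : Lf H j (Vj j) d = 0.
      by rewrite Lf_cf //; have := hker (inr j); rewrite inE jC; apply.
    rewrite Lform //; rewrite Lform // in h0.
    case: (pattern box tV tVj) => hp.
      rewrite -[RHS]h0; apply: eq_bigr => i iN; case: (boolP (fracv x i)) => fi.
        by rewrite (hp i iN fi).
      by rewrite (dfr i fi) oppr0; case: ifP; case: ifP.
    rewrite -[RHS]oppr0 -[in RHS]h0 -sumrN; apply: eq_bigr => i iN; case: (boolP (fracv x i)) => fi.
      by move: (hp i iN fi); case: (i \in V); case: (i \in Vj j) => //= _; rewrite opprK.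
    by rewrite (dfr i fi); case: ifP; case: ifP; rewrite ?oppr0.
  rewrite Lform // big1 // => i iN.
  have -> : d i = 0.
    case: (boolP (fracv x i)) => fi; last by apply: dfr.
    case: (boolP (i \in W)) => iW; last by apply: dW.
    move: iW; rewrite inE => iK; move: jK; rewrite (K_chk iK) //.
    by move: iN; rewrite inE.
  by rewrite oppr0; case: ifP.
have := perturb hopt dfr hdt i0.
by move=> h; move: hk; rewrite /d in h; rewrite h eqxx.
Qed.


Lemma W_nonempty : (0 < #|W|)%N.
Proof.
apply/card_gt0P.
have vK : v \in K by rewrite inE connect0.
case: v hv vK => [i|j] hv' vK.
  by exists i; rewrite inE.
have /existsP [i /andP[hji fi]] := hv'.
exists i; rewrite inE; apply: (K_var vK hji fi).
Qed.

Lemma final : cluster_has_cycle H x v.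
Proof.
pose X := [set u : tanner_vertex m n | match u with inl i => i \in W | inr j => j \in Ct end].
have XK : X \subset K.
  apply/subsetP => -[i|j]; rewrite inE; first by rewrite inE.
  by rewrite inE => /andP[].
have cX : #|X| = (#|W| + #|Ct|)%N.
  rewrite card_sum; congr (_ + _)%N; apply: eq_card => ?; by rewrite !inE.
have dl : forall i, degX e X (inl i) = (\sum_(j in Ct) e (inl i) (inr j))%N.
  move=> i; rewrite /degX -sum_nat_card.
  rewrite (big_sumType _ (fun u => u \in X)) /=.
  rewrite big1 ?add0n; last by move=> k _; rewrite /e /frac_adj /tanner_adj !andbF.
  by apply: eq_bigl => j; rewrite inE.
have dr : forall j, degX e X (inr j) = (\sum_(i in W) e (inr j) (inl i))%N.
  move=> j; rewrite /degX -sum_nat_card.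
  rewrite (big_sumType _ (fun u => u \in X)) /=.
  rewrite [X in (_ + X)%N]big1 ?addn0; last by move=> k _; rewrite /e /frac_adj /tanner_adj !andbF.
  by apply: eq_bigl => i; rewrite inE.
have d2 : forall j, j \in Ct -> (2 <= degX e X (inr j))%N.
  move=> j jC; apply: leq_trans (two_frac jC) _.
  rewrite -(card_imset _ (@inl_inj 'I_n 'I_m)) /degX; apply: subset_leq_card.
  apply/subsetP => w /imsetP [i]; rewrite inE => /andP[hji fi] ->.
  move: (jC); rewrite inE => /andP[jK _].
  have := K_var jK hji fi; rewrite !inE => ->/=.
  by apply/and3P; split; [exact: (K_frac jK) | exact: fi | exact: hji].
have hsum : (\sum_(u in X) degX e X u =
    \sum_(j in Ct) degX e X (inr j) + \sum_(j in Ct) degX e X (inr j))%N.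
  rewrite (big_sumType _ (fun u => u \in X)) /=; congr (_ + _)%N.
    rewrite (eq_bigl (fun i => i \in W)); last by move=> i; rewrite inE.
    rewrite (eq_bigr _ (fun i _ => dl i)) exchange_big /=.
    by apply: eq_bigr => j _; rewrite dr; apply: eq_bigr => i _; rewrite esym.
  by apply: eq_bigl => j; rewrite inE.
have hge : (2 * #|Ct| <= \sum_(j in Ct) degX e X (inr j))%N.
  rewrite -sum1_card big_distrr /=; apply: leq_sum => j jC; rewrite muln1; exact: d2.
have hWC := count_WC.
have hc : has_cyc e X.
  apply: core_cycle; [exact: esym | exact: eirr | |].
    by rewrite cX; have := W_nonempty; move: #|W| #|Ct| => a b; lia.
  rewrite hsum cX; move: hge hWC.
  move: (\sum_(j in Ct) degX e X (inr j))%N #|W| #|Ct| => s a b; lia.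
case: hc => s [h1 h2 h3 h4]; exists s; split => //.
apply/allP => w /(allP h4) wX.
by have := subsetP XK w wX; rewrite inE.
Qed.

End Main.

Theorem theorem4 (R : realFieldType) (m n : nat) (H : 'M[bool]_(m, n))
  (gamma x : 'I_n -> R) :
  unique_lp_optimum H gamma x ->
  forall v : tanner_vertex m n, frac_vertex H x v -> cluster_has_cycle H x v.
Proof. by move=> hopt v hv; apply: (final hopt hv). Qed.
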